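(* Let $D$ be a delta-matroid on $[n,\overline{n}]$. Let $A,B\subseteq[n]$ be disjoint, and let $S\in\operatorname{AdS}_n$ be disjoint from $A\cup B\cup\overline{A}\cup\overline{B}$. Then $$g_{D/A\setminus B}(S)=g_D(S\cup A\cup\overline{B})-g_D(A\cup\overline{B}).$$
   Context: For a finite $E\subseteq\{1,2,\dots\}$ let $E\cup\overline{E}$ consist of $E$ and formal copies $\overline{i}$ ($i\in E$), with involution $a\mapsto\overline{a}$; $\overline{S}=\{\overline{a}:a\in S\}$; $[n,\overline{n}]$ is the case $E=[n]$. A subset is admissible if it contains at most one of $i,\overline{i}$ for each $i$; $\operatorname{AdS}_n$ is the set of admissible subsets of $[n,\overline{n}]$. In $\mathbb{R}^E$ set $e_{\overline{i}}=-e_i$, $e_S=\sum_{a\in S}e_a$. A delta-matroid on $E\cup\overline{E}$ is a nonempty collection $\mathcal{F}$ of admissible sets of size $|E|$ (feasible sets) such that $\operatorname{Conv}\{e_B:B\in\mathcal{F}\}$ has all edges parallel to some $e_i$ or $e_i\pm e_j$. Its rank function is $g_D(S)=\max_{B\in\mathcal{F}}(|S\cap B|-|\overline{S}\cap B|)$ for admissible $S$. For $i\in E$: $i$ is a loop if no feasible set contains $i$, and a coloop if every feasible set contains $i$. If $i$ is not a loop, the contraction $D/i$ (on $(E\setminus\{i\})\cup\overline{(E\setminus\{i\})}$) has feasible sets $B\setminus\{i\}$ for feasible $B\ni i$; if $i$ is not a coloop, the deletion $D\setminus i$ has feasible sets $B\setminus\{\overline{i}\}$ for feasible $B\ni\overline{i}$;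 the projection $D(i)$ has feasible sets $B\setminus\{i,\overline{i}\}$ for all feasible $B$; if $i$ is a loop or a coloop, $D/i=D\setminus i=D(i)$. For $A\subseteq E$, $D/A$ and $D\setminus A$ are obtained by successively contracting, resp. deleting, all elements of $A$ (the result does not depend on the order); for disjoint $A,B$, $D/A\setminus B$ is obtained by contracting $A$ and then deleting $B$ (same as deleting $B$ then contracting $A$). *)

(* Defs.v *)
From HB Require Import structures.
From mathcomp Require Import all_boot all_order all_algebra.
Set Implicit Arguments. Unset Strict Implicit. Unset Printing Implicit Defensive.
Import Order.TTheory GRing.Theory Num.Theory.
Local Open Scope ring_scope.

(* Signed elements of [n, \bar n]: (i, false) stands for the element i+1,
   (i, true) stands for its formal copy \bar{(i+1)}.  A ground set E is a
   subset of 'I_n (i.e. of [n] after the shift i |-> i+1). *)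
Definition selt (n : nat) := ('I_n * bool)%type.

Definition pos n (A : {set 'I_n}) : {set selt n} := [set (i, false) | i in A].
Definition neg n (A : {set 'I_n}) : {set selt n} := [set (i, true) | i in A].

Definition sbar n (a : selt n) : selt n := (a.1, ~~ a.2).
Definition setbar n (S : {set selt n}) : {set selt n} := [set sbar a | a in S].

Definition admissible n (S : {set selt n}) : bool :=
  [forall i : 'I_n, ~~ (((i, false) \in S) && ((i, true) \in S))].

(* e_S in R^n (coordinates outside the ground set are 0 for the sets used) *)
Definition evec n (S : {set selt n}) : 'rV[rat]_n :=
  \row_i (((i, false) \in S)%:R - ((i, true) \in S)%:R).

Definition dotv n (c v : 'rV[rat]_n) : rat := \sum_i c 0 i * v 0 i.

Definition unitv n (i : 'I_n) : 'rV[rat]_n := delta_mx 0 i.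

Definition good_direction n (d : 'rV[rat]_n) : Prop :=
  exists lam : rat, lam != 0 /\
    ((exists i, d = lam *: unitv i) \/
     (exists i j, i != j /\
        (d = lam *: (unitv i + unitv j) \/ d = lam *: (unitv i - unitv j)))).

(* [e_B1, e_B2] is an edge of Conv{e_B : B in F}: the two points are distinct
   and form exactly the set of points of {e_B : B in F} maximizing some linear
   functional (every 1-dimensional face of a polytope is exposed, and all e_B
   for feasible B are vertices of the cube, hence extreme). *)
Definition is_edge n (F : {set {set selt n}}) (B1 B2 : {set selt n}) : Prop :=
  [/\ B1 \in F, B2 \in F, evec B1 != evec B2 &
    exists c : 'rV[rat]_n,
      dotv c (evec B1) = dotv c (evec B2) /\
      forall B, B \in F ->
        dotv c (evec B) <= dotv c (evec B1) /\
        (dotv c (evec B) = dotv c (evec B1) ->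
           evec B = evec B1 \/ evec B = evec B2)].

Definition is_delta_matroid n (E : {set 'I_n}) (F : {set {set selt n}}) : Prop :=
  [/\ F != set0,
      (forall B, B \in F ->
         [/\ admissible B, B \subset pos E :|: neg E & #|B| = #|E|]) &
      (forall B1 B2, is_edge F B1 B2 -> good_direction (evec B1 - evec B2))].

(* rank function g_D(S) = max_{B in F} (|S cap B| - |\bar S cap B|).
   The default -#|S| is a lower bound of every term, so for nonempty F
   this is exactly the maximum over F. *)
Definition rankfun n (F : {set {set selt n}}) (S : {set selt n}) : int :=
  \big[Num.max/ - (#|S|%:Z)]_(B in F)
     ((#|S :&: B|)%:Z - (#|setbar S :&: B|)%:Z).

(* single-element minors (i a loop: no feasible set contains i;
   i a coloop: every feasible set contains i, i.e. none contains \bar i) *)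
Definition projection n (i : 'I_n) (F : {set {set selt n}}) : {set {set selt n}} :=
  [set B :\: [set (i, false); (i, true)] | B in F].

Definition contract1 n (i : 'I_n) (F : {set {set selt n}}) : {set {set selt n}} :=
  if [exists B in F, (i, false) \in B]
  then [set B :\ (i, false) | B in [set B in F | (i, false) \in B]]
  else projection i F.

Definition delete1 n (i : 'I_n) (F : {set {set selt n}}) : {set {set selt n}} :=
  if [exists B in F, (i, true) \in B]
  then [set B :\ (i, true) | B in [set B in F | (i, true) \in B]]
  else projection i F.

Definition contract n (A : {set 'I_n}) (F : {set {set selt n}}) :=
  foldr (@contract1 n) F (enum A).
Definition delete n (A : {set 'I_n}) (F : {set {set selt n}}) :=
  foldr (@delete1 n) F (enum A).

(* Main.v *)
Require Import Defs.
From HB Require Import structures.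
From mathcomp Require Import all_boot all_order all_algebra.
From mathcomp Require Import ring lra zify.
Set Implicit Arguments. Unset Strict Implicit. Unset Printing Implicit Defensive.
Import Order.TTheory GRing.Theory Num.Theory.
Local Open Scope ring_scope.

Section Aux.
Variable n : nat.
Implicit Types (T U W X Y Z : {set selt n}) (F : {set {set selt n}}).

Definition tv T (i : 'I_n) : int := ((i,false) \in T)%:Z - ((i,true) \in T)%:Z.
Definition val T W : int := (#|T :&: W|)%:Z - (#|setbar T :&: W|)%:Z.
Definition transv W := forall i, ((i,true) \in W) = ~~ ((i,false) \in W).
Definition diff X W : {set 'I_n} := [set i | ((i,false) \in X) != ((i,false) \in W)].

Lemma sum_selt (g : selt n -> int) : \sum_(a : selt n) g a = \sum_i (g (i,false) + g (i,true)).
Proof.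
transitivity (\sum_i \sum_(b : bool) g (i,b)).
  by rewrite pair_bigA; apply: eq_bigr => -[i b].
by apply: eq_bigr => i _; rewrite big_bool addrC.
Qed.

Lemma cardZ (A : {set selt n}) : (#|A|)%:Z = \sum_(a : selt n) (a \in A)%:Z.
Proof.
rewrite -sum1_card (big_morph _ PoszD (erefl 0%Z)) big_mkcond /=.
by apply: eq_bigr => a _; case: (a \in A).
Qed.

Lemma mem_setbar T a : (a \in setbar T) = (sbar a \in T).
Proof.
have K : cancel (@sbar n) (@sbar n) by case=> i b; rewrite /sbar /= negbK.
by rewrite /setbar (can2_imset_pre _ K K) inE.
Qed.

Lemma val_sum T W : val T W = \sum_i tv T i * tv W i.
Proof.
rewrite /val !cardZ -sumrB sum_selt; apply: eq_bigr => i _.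
rewrite !inE !mem_setbar /sbar /= /tv.
by case: ((i,false) \in T); case: ((i,true) \in T); case: ((i,false) \in W); case: ((i,true) \in W).
Qed.


Lemma cardZ' (I : finType) (A : {set I}) : (#|A|)%:Z = \sum_(a : I) (a \in A)%:Z.
Proof.
rewrite -sum1_card (big_morph _ PoszD (erefl 0%Z)) big_mkcond /=.
by apply: eq_bigr => a _; case: (a \in A).
Qed.

Lemma dm_transv F W : is_delta_matroid [set: 'I_n] F -> W \in F -> transv W.
Proof.
case=> _ H _ /H [adm _ cW] i.
move/forallP: adm => adm.
have inj : {in W &, injective (fun a : selt n => a.1)}.
  move=> [j b] [j' b'] /= Hb Hb' ej; subst j'.
  case: b b' Hb Hb' => [] [] //= Hb Hb'.
    by move: (adm j); rewrite Hb Hb'.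
  by move: (adm j); rewrite Hb Hb'.
case Hf: ((i,false) \in W); case Ht: ((i,true) \in W) => //=.
  by move: (adm i); rewrite Hf Ht.
exfalso.
have sub : [set a.1 | a in W] \subset [set~ i].
  apply/subsetP => j /imsetP [[k b] Hk ->] /=; rewrite !inE.
  by apply/eqP => ek; subst k; case: b Hk; rewrite ?Hf ?Ht.
move: (subset_leq_card sub); rewrite card_in_imset // cW cardsC1 cardsT card_ord.
move=> Hc; have Hi := ltn_ord i.
by rewrite -{1}(prednK (leq_ltn_trans (leq0n i) Hi)) ltnn in Hc.
Qed.

Lemma transv_neg W i b : transv W -> ((i, ~~ b) \in W) = ~~ ((i, b) \in W).
Proof. by move=> tW; case: b; rewrite /= tW ?negbK. Qed.

Lemma tv_transv W i : transv W -> tv W i = if (i,false) \in W then 1 else -1.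
Proof. by move=> tW; rewrite /tv tW; case: ((i,false) \in W). Qed.

Lemma tv_diff X W i : transv X -> transv W ->
  tv W i = if i \in diff X W then - tv X i else tv X i.
Proof.
move=> tX tW; rewrite !tv_transv // inE.
by case: ((i,false) \in X); case: ((i,false) \in W).
Qed.

Lemma tv_bound T i : (tv T i == 0) || (tv T i == 1) || (tv T i == -1).
Proof. by rewrite /tv; case: ((i,false) \in T); case: ((i,true) \in T). Qed.

Lemma val_diff T X W : transv X -> transv W ->
  val T W - val T X = 2 * \sum_(i in diff X W) tv T i * tv W i.
Proof.
move=> tX tW; rewrite !val_sum -sumrB mulr_sumr [RHS]big_mkcond /=.
apply: eq_bigr => i _; rewrite (tv_diff i tX tW).
case: (i \in diff X W); last by rewrite subrr.
ring.
Qed.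

Lemma val_self_diff X W : transv X -> transv W ->
  val X W = n%:Z - 2 * (#|diff X W|)%:Z.
Proof.
move=> tX tW; rewrite val_sum cardZ' mulr_sumr.
have E : (n%:Z) = \sum_(i : 'I_n) 1 by rewrite sumr_const card_ord -natz.
rewrite [X in X - _]E -sumrB; apply: eq_bigr => i _; rewrite (tv_diff i tX tW).
case: (i \in diff X W); rewrite !tv_transv //; case: ((i,false) \in X) => //.
Qed.

Lemma evecE T : evec T = \row_i ((tv T i)%:~R : rat).
Proof.
apply/rowP => i; rewrite !mxE /tv intrB.
by case: ((i,false) \in T); case: ((i,true) \in T).
Qed.

Lemma dotv_evec T W : dotv (evec T) (evec W) = (val T W)%:~R.
Proof.
rewrite /dotv val_sum rmorph_sum; apply: eq_bigr => i _.
by rewrite !evecE !mxE -intrM.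
Qed.


Lemma ex_argmin (I : finType) disp (O : orderType disp) (P : pred I) (f : I -> O) j :
  P j -> exists2 i, P i & forall k, P k -> (f i <= f k)%O.
Proof. move=> Pj. case: (Order.TotalTheory.arg_minP f Pj) => i Pi H. by exists i. Qed.

Lemma dotvD (u v w : 'rV[rat]_n) : dotv (u + v) w = dotv u w + dotv v w.
Proof. by rewrite /dotv -big_split; apply: eq_bigr => i _; rewrite mxE mulrDl. Qed.

Lemma dotvZ a (u w : 'rV[rat]_n) : dotv (a *: u) w = a * dotv u w.
Proof. by rewrite /dotv mulr_sumr; apply: eq_bigr => i _; rewrite mxE mulrA. Qed.

Lemma evec_diff X W : transv X -> transv W -> evec W = \row_i (if i \in diff X W then - (tv X i)%:~R else (tv X i)%:~R).
Proof.
move=> tX tW; rewrite evecE; apply/rowP => i; rewrite !mxE (tv_diff i tX tW).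
by case: (i \in diff X W); rewrite ?intrN.
Qed.

Lemma tv_unit W i : transv W -> (tv W i == 1) || (tv W i == -1).
Proof. by move=> tW; rewrite tv_transv //; case: ((i,false) \in W). Qed.

Lemma gd_card X Z : transv X -> transv Z -> good_direction (evec X - evec Z) ->
  (#|diff X Z| <= 2)%N.
Proof.
move=> tX tZ [lam [_ H]].
have ent k : k \in diff X Z -> (evec X - evec Z) 0 k != 0.
  move=> kD; rewrite !evecE !mxE (tv_diff k tX tZ) kD intrN opprK.
  by case/orP: (tv_unit k tX) => /eqP ->.
case: H => [[i E]|[i [j [_ E]]]].
  have sub : diff X Z \subset [set i].
    apply/subsetP => k kD; move: (ent k kD); rewrite E !mxE inE.
    by case: (k =P i) => // _; rewrite andbF mulr0 eqxx.
  by apply: leq_trans (subset_leq_card sub) _; rewrite cards1.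
have sub : diff X Z \subset [set i; j].
  apply/subsetP => k kD; move: (ent k kD); case: E => ->; rewrite !mxE !inE;
  by case: (k =P i) => // _; case: (k =P j) => // _; rewrite !andbF ?addr0 ?subr0 mulr0 eqxx.
by apply: leq_trans (subset_leq_card sub) _; rewrite cards2; case: (i != j).
Qed.


Lemma improve F T X Y : is_delta_matroid [set: 'I_n] F -> X \in F -> Y \in F ->
  val T X < val T Y ->
  exists2 Z, Z \in F & (val T X < val T Z) /\ (#|diff X Z| <= 2)%N.
Proof.
move=> dm XF YF lt.
have tX := dm_transv dm XF.
pose b W : rat := (val T W - val T X)%:~R.
pose d W : rat := (#|diff X W|)%:R.
pose P := [pred W | (W \in F) && (0 < b W)].
have PY : P Y by rewrite /= YF /b ltr0z subr_gt0.
have [Z1 PZ1 minZ1] := ex_argmin (fun W => d W / b W) PY.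
pose r := d Z1 / b Z1.
pose P2 := [pred W | P W && (d W / b W == r)].
have P2Z1 : P2 Z1 by apply/andP; split; [exact: PZ1 | apply: eqxx].
have [Z P2Z minZ] := ex_argmin (fun W => #|diff X W|) P2Z1.
move: (P2Z) => /andP [/andP [ZF bZ] /eqP rZ].
have tZ := dm_transv dm ZF.
pose p := d Z. pose q := b Z.
have p0 : 0 <= p by rewrite /p /d ler0n.
have key W : W \in F -> (p * b W - q * d W <= 0) /\ (p * b W - q * d W = 0 -> d W = 0 \/ P2 W).
  move=> WF; have d0 : 0 <= d W by rewrite /d ler0n.
  case: (ltrP 0 (b W)) => bW.
    have H : (d Z1 / b Z1 <= d W / b W)%O by apply: minZ1; apply/andP; split.
    have H' : p / q <= d W / b W by rewrite /p /q rZ.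
    rewrite ler_pdivlMr // mulrAC ler_pdivrMr // in H'.
    split; first by lra.
    move=> E; right; apply/andP; split; first by apply/andP; split.
    rewrite -rZ.
    rewrite eqr_div ?(gt_eqF bW) ?(gt_eqF bZ) //.
    apply/eqP; rewrite -/p -/q; lra.
  have h1 : p * b W <= 0 by apply: mulr_ge0_le0.
  have h2 : 0 <= q * d W by apply: mulr_ge0 => //; apply: ltW.
  split; first by lra.
  move=> E; left; have : q * d W = 0 by lra.
  by move/eqP; rewrite mulf_eq0 (gt_eqF bZ) /= => /eqP.
pose mu W : int := \sum_i (if i \in diff X Z then 0 else tv X i * tv W i).
have muX W : W \in F -> mu W <= mu X /\ (mu W = mu X -> diff X W \subset diff X Z).
  move=> WF; have tW := dm_transv dm WF.
  have E : mu X - mu W = \sum_i (if i \in diff X Z then 0 else if i \in diff X W then 2 else 0).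
    rewrite /mu -sumrB; apply: eq_bigr => i _; case: (i \in diff X Z); first by rewrite subr0.
    rewrite (tv_diff i tX tW).
    by case: (i \in diff X W); case/orP: (tv_unit i tX) => /eqP ->.
  have ge : forall i, true -> 0 <= (if i \in diff X Z then 0 else if i \in diff X W then 2 else 0 : int).
    by move=> i _; case: (i \in diff X Z); case: (i \in diff X W).
  split; first by rewrite -subr_ge0 E; apply: sumr_ge0.
  move=> eq; apply/subsetP => i iW; apply: contraT => iZ.
  have : (\sum_i (if i \in diff X Z then 0 else if i \in diff X W then 2 else 0 : int)) == 0.
    by rewrite -E eq subrr.
  rewrite psumr_eq0 // => /allP /(_ i (mem_index_enum i)).
  by rewrite (negbTE iZ) iW.
pose m := \row_i (if i \in diff X Z then 0 else (tv X i)%:~R : rat).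
pose hv := p *: evec T + (q / 2) *: evec X + m.
have mE V : dotv m (evec V) = (mu V)%:~R.
  rewrite /dotv /mu rmorph_sum; apply: eq_bigr => i _; rewrite evecE !mxE.
  by case: (i \in diff X Z); rewrite ?mul0r // rmorphM.
have dXX : diff X X = set0 by apply/setP => i; rewrite !inE eqxx.
have Phi W : W \in F -> dotv hv (evec W) - dotv hv (evec X) = (p * b W - q * d W) + (mu W - mu X)%:~R.
  move=> WF; have tW := dm_transv dm WF.
  rewrite /hv !dotvD !dotvZ !dotv_evec !mE (val_self_diff tX tW) (val_self_diff tX tX) dXX cards0.
  rewrite /b /d !intrB !intrM /=.
  have -> : ((#|diff X W|)%:Z)%:~R = (#|diff X W|)%:R :> rat by [].
  have -> : (2%:Z)%:~R = 2 :> rat by [].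
  have -> : (0%:Z)%:~R = 0 :> rat by [].
  by field.
have muZ : mu Z = mu X.
  rewrite /mu; apply: eq_bigr => i _; case iZ: (i \in diff X Z) => //.
  by rewrite (tv_diff i tX tZ) iZ.
have edge : is_edge F X Z.
  split => //.
    apply/eqP => E; have := congr1 (dotv (evec T)) E; rewrite !dotv_evec => /intr_inj E2.
    by move: bZ; rewrite /b E2 subrr ltxx.
  exists hv; split.
    apply/eqP; rewrite eq_sym -subr_eq0 Phi // muZ subrr addr0 /p /q.
    by apply/eqP; ring.
  move=> W WF; have [k1 k2] := key W WF; have [m1 m2] := muX W WF.
  have m1' : ((mu W - mu X)%:~R : rat) <= 0 by rewrite lerz0 subr_le0.
  split; first by rewrite -subr_le0 Phi //; lra.
  move=> /eqP; rewrite -subr_eq0 Phi // => /eqP E.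
  have E1 : p * b W - q * d W = 0 by lra.
  have E2 : mu W = mu X.
    by apply/eqP; rewrite -subr_eq0; apply/eqP; apply: (@intr_inj rat); rewrite /=; lra.
  have tW := dm_transv dm WF.
  case: (k2 E1) => [dW|P2W].
    left; rewrite (evec_diff tX tW) evecE.
    have -> : diff X W = set0.
      by apply: cards0_eq; apply/eqP; rewrite -(eqr_nat rat) -/(d W) dW.
    by apply/rowP => i; rewrite !mxE inE.
  right; have := minZ W P2W; rewrite leEnat => le.
  have eD : diff X W = diff X Z by apply/eqP; rewrite eqEcard (m2 E2) le.
  by rewrite (evec_diff tX tW) (evec_diff tX tZ) eD.
case: dm => [_ _ gd].
exists Z => //; split; last by apply: gd_card => //; apply: gd.
by move: bZ; rewrite /b ltr0z subr_gt0.
Qed.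


Lemma ex_argmax (I : finType) disp (O : orderType disp) (P : pred I) (f : I -> O) j :
  P j -> exists2 i, P i & forall k, P k -> (f k <= f i)%O.
Proof. move=> Pj. case: (Order.TotalTheory.arg_maxP f Pj) => i Pi H. by exists i. Qed.

Lemma val_ge T W : - (#|T|%:Z) <= val T W.
Proof.
have h : (#|setbar T :&: W| <= #|T|)%N.
  apply: leq_trans (subset_leq_card (subsetIl _ _)) _; exact: leq_imset_card.
rewrite /val; lia.
Qed.

Lemma rank_le F T W : W \in F -> val T W <= rankfun F T.
Proof. by move=> WF; rewrite /rankfun; apply: le_bigmax_cond. Qed.

Lemma rank_char F T r : (exists2 W, W \in F & val T W = r) ->
  (forall W, W \in F -> val T W <= r) -> rankfun F T = r.
Proof.
move=> [W0 W0F <-] H; apply: le_anti; apply/andP; split; last exact: rank_le.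
rewrite /rankfun; apply: bigmax_le => //; exact: val_ge.
Qed.

Lemma rank_ex F T W0 : W0 \in F -> exists2 W, W \in F & rankfun F T = val T W.
Proof.
move=> W0F; rewrite /rankfun.
have [W WF ->] := @eq_bigmax _ _ _ (- (#|T|%:Z)) W0 (mem F) (val T) W0F (fun W _ => val_ge T W).
by exists W.
Qed.

Definition argm F T := [set W in F | [forall W' in F, val T W' <= val T W]].

Lemma argm_char F T r : (exists2 W, W \in F & val T W = r) ->
  (forall W, W \in F -> val T W <= r) ->
  forall W, (W \in argm F T) = (W \in F) && (val T W == r).
Proof.
move=> [W0 W0F e0] H W; rewrite inE; apply/andP/andP => -[WF h]; split => //.
  rewrite eq_le H //=; rewrite -e0; move/forall_inP: h; exact.
apply/forall_inP => W' W'F; rewrite (eqP h); exact: H.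
Qed.

Definition op1 (a : selt n) F : {set {set selt n}} :=
  if [exists B in F, a \in B] then [set B :\ a | B in [set B in F | a \in B]]
  else projection a.1 F.

Lemma tv_setU U T i : [disjoint U & T] -> tv (U :|: T) i = tv U i + tv T i.
Proof.
move=> dUT; rewrite /tv !inE.
have h1 := disjointFr dUT.
case E1: ((i,false) \in U); case E2: ((i,true) \in U);
  rewrite ?(h1 _ E1) ?(h1 _ E2); case: ((i,false) \in T); case: ((i,true) \in T) => //.
Qed.

Lemma val_setU U T W : [disjoint U & T] -> val (U :|: T) W = val U W + val T W.
Proof.
move=> d; rewrite !val_sum -big_split; apply: eq_bigr => i _.
by rewrite tv_setU // mulrDl.
Qed.

Lemma card1I (x : selt n) W : #|[set x] :&: W| = (x \in W).
Proof.
case: (boolP (x \in W)) => h.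
  by rewrite (setIidPl _) ?sub1set ?cards1.
have -> : [set x] :&: W = set0 by apply/setP => y; rewrite !inE; case: eqP => // ->; rewrite (negbTE h).
by rewrite cards0.
Qed.

Lemma val1 a W : transv W -> val [set a] W = if a \in W then 1 else -1.
Proof.
move=> tW; rewrite /val /setbar imset_set1 !card1I.
case: a => i b; rewrite /sbar /= transv_neg //.
by case: ((i,b) \in W).
Qed.


End Aux.
Arguments op1 {n}. Arguments tv {n}. Arguments val {n}. Arguments transv {n}. Arguments diff {n}. Arguments argm {n}.
Lemma L1 (v m : int) : (1 + v == 1 + m) = (v == m). Proof. by apply/eqP/eqP => e; lia. Qed.
Lemma L2 (v m : int) : v <= m -> (-1 + v == 1 + m) = false. Proof. by move=> h; apply/eqP => e; lia. Qed.
Lemma L3 (v m : int) (b : bool) : v <= m -> (if b then 1 else -1) + v <= 1 + m. Proof. by case: b => h; lia. Qed.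
Lemma L4 (v m : int) : v + 2 <= m -> 1 + v <= -1 + m. Proof. by move=> h; lia. Qed.
Lemma L5 (v m : int) : v <= m -> -1 + v <= -1 + m. Proof. by move=> h; lia. Qed.
Lemma L6 (v m : int) : -1 + v = -1 + m -> v = m. Proof. by move=> h; lia. Qed.
Lemma L7 (v m : int) : 1 + v = -1 + m -> v < m. Proof. by move=> h; lia. Qed.
Lemma L8 (v m z : int) : 1 + v = -1 + m -> v + 2 <= z -> z <= m -> z = m. Proof. by move=> h1 h2 h3; lia. Qed.
Lemma L9 (s t r m : int) : s + t <= r -> t = m -> s <= r - m. Proof. by move=> h1 h2; lia. Qed.
Lemma L10 (u v : int) : -1 <= u <= 1 -> -1 <= v <= 1 -> u = 0 \/ v = 0 -> 0 < u -> 0 <= u + v.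
Proof. by move=> /andP [h1 h2] /andP [h3 h4] [] h5 h6; lia. Qed.
Lemma L11 (u1 v1 u2 v2 : int) : -1 <= u1 <= 1 -> -1 <= v1 <= 1 -> u1 = 0 \/ v1 = 0 ->
  -1 <= u2 <= 1 -> -1 <= v2 <= 1 -> u2 = 0 \/ v2 = 0 -> 0 < u1 + u2 -> 0 <= (u1 + v1) + (u2 + v2).
Proof. by move=> /andP [h1 h2] /andP [h3 h4] [] h5 /andP [h7 h8] /andP [h9 h10] [] h11 h12; lia. Qed.
Lemma L12 (s t r m : int) : s + t = r -> t = m -> s = r - m. Proof. by move=> h1 h2; lia. Qed.
Section Aux2.
Variable n : nat.
Implicit Types (T U W X Y Z : {set selt n}) (F : {set {set selt n}}).
Lemma setD_agree W Z (s : seq 'I_n) : transv W -> transv Z ->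
  (forall i, i \in diff W Z -> i \in s) ->
  W :\: [set x | x.1 \in s] = Z :\: [set x | x.1 \in s].
Proof.
move=> tW tZ H; apply/setP => -[i b]; rewrite !inE /=.
case: (boolP (i \in s)) => //= ni.
have : i \notin diff W Z by apply: contra ni; exact: H.
rewrite inE negbK => /eqP e.
by case: b; rewrite ?e // tW tZ e.
Qed.

Lemma tv_out T (s : seq 'I_n) i : (forall x, x \in T -> x.1 \in s) -> i \notin s -> tv T i = 0.
Proof.
move=> H ni; rewrite /tv.
case E1: ((i,false) \in T); first by move: (H _ E1) => /= h; rewrite h in ni.
case E2: ((i,true) \in T); first by move: (H _ E2) => /= h; rewrite h in ni.
by [].
Qed.

Lemma memdiff W Z a : transv W -> transv Z -> a \in W -> a \notin Z -> a.1 \in diff W Z.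
Proof.
case: a => i b tW tZ aW aZ; rewrite inE /=.
case: b aW aZ => aW aZ; last by rewrite aW (negbTE aZ).
by move: aW aZ; rewrite tW tZ negbK => aW aZ; rewrite (negbTE aW) aZ.
Qed.

Lemma minor_char F L : is_delta_matroid [set: 'I_n] F -> uniq (map fst L) ->
  foldr op1 F L = [set W :\: [set x | x.1 \in map fst L] | W in argm F [set x in L]].
Proof.
move=> dm; have [F0 _ _] := dm; have [W0 W0F] := set0Pn _ F0.
have tvF W : W \in F -> transv W by move=> WF; exact: dm_transv dm WF.
elim: L => [_|a L IH] /=.
  have -> : argm F [set x in [::]] = F.
    apply/setP => W; rewrite inE andb_idr // => WF; apply/forall_inP => W' _.
    have -> : [set x in [::]] = set0 :> {set selt n} by apply/setP => x; rewrite !inE.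
    have v0 V : val set0 V = 0 by rewrite val_sum; apply: big1 => i _; rewrite /tv !inE /= subrr mul0r.
    by rewrite !v0.
  apply/setP => W; apply/idP/imsetP => [WF|[W' W'F ->]].
    by exists W => //; apply/setP => x; rewrite !inE.
  by have -> : W' :\: [set x | x.1 \in [::]] = W' by apply/setP => x; rewrite !inE.
move=> /andP [naL uL].
rewrite (IH uL) {IH}.
set TL := [set x in L]. set CL := [set x : selt n | x.1 \in map fst L].
set G := argm F TL.
have aTL : a \notin TL by rewrite inE; apply: contra naL => aL; apply/mapP; exists a.
have TE : [set x in a :: L] = [set a] :|: TL by apply/setP => x; rewrite !inE.
have dis : [disjoint [set a] & TL] by rewrite disjoints1.
have vE W : val [set x in a :: L] W = val [set a] W + val TL W by rewrite TE val_setU.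
have [Wm WmF mE] := rank_ex TL W0F.
have ub W : W \in F -> val TL W <= rankfun F TL by move=> WF; exact: rank_le.
move: (rankfun F TL) mE ub => m mE ub.
have Gc := argm_char (ex_intro2 _ _ Wm WmF (esym mE)) ub.
have tvTL0 i : i \notin map fst L -> tv TL i = 0.
  by apply: tv_out => x; rewrite inE => xL; apply/mapP; exists x.
have parity W W' : W \in F -> W' \in F -> val TL W' < val TL W -> val TL W' + 2 <= val TL W.
  move=> WF W'F lt; have := val_diff TL (tvF _ W'F) (tvF _ WF).
  set k := \sum_(i in _) _ => e; lia.
have aCL : a \notin CL by rewrite inE.
have exE : [exists B in [set W :\: CL | W in G], a \in B] = [exists W in G, a \in W].
  apply/existsP/existsP => [[B /andP [/imsetP [W WG ->] aB]]|[W /andP [WG aW]]].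
    by exists W; rewrite WG /=; move: aB; rewrite inE => /andP [].
  exists (W :\: CL) => //; apply/andP; split; [by apply/imsetP; exists W | by rewrite inE aW aCL].
rewrite /op1 exE.
case: ifPn => [/existsP [W1 /andP [W1G aW1]] | nex].
  have W1F : W1 \in F by move: W1G; rewrite Gc => /andP [].
  have vW1 : val TL W1 = m by move: W1G; rewrite Gc => /andP [_ /eqP].
  have Ac W : (W \in argm F [set x in a :: L]) = (W \in G) && (a \in W).
    rewrite (argm_char (r := 1 + m)).
    - rewrite Gc; case: (boolP (W \in F)) => //= WF.
      have tW := tvF _ WF; rewrite vE (val1 _ tW); have := ub W WF.
      case: (a \in W); rewrite ?andbT ?andbF => h; [exact: L1 | exact: L2].
    - by exists W1 => //; rewrite vE (val1 _ (tvF _ W1F)) aW1 vW1.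
    - move=> W2 W2F; rewrite vE (val1 _ (tvF _ W2F)); exact: L3 (ub W2 W2F).
  have eqD W : W \in F -> a \in W ->
      (W :\: CL) :\ a = W :\: [set x | x.1 \in a.1 :: map fst L].
    move=> WF aW; have tW := tvF _ WF; apply/setP => -[i b]; rewrite !inE /=.
    case: a aW {naL aTL TE dis vE exE aCL W1G aW1 Ac} => ai ab aW.
    rewrite xpair_eqE /=; case: (i =P ai) => [->|_] //=.
    case: (b =P ab) => [->|/eqP nb] //=.
    have -> : b = ~~ ab by case: b ab nb {aW} => [] [].
    by rewrite transv_neg // aW andbF.
  apply/setP => B; apply/imsetP/imsetP.
    move=> [B' ]; rewrite inE => /andP [/imsetP [W WG ->] aB] ->.
    have aW : a \in W by move: aB; rewrite inE => /andP [].
    have WF : W \in F by move: WG; rewrite Gc => /andP [].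
    by exists W; [rewrite Ac WG | rewrite eqD].
  move=> [W]; rewrite Ac => /andP [WG aW] ->.
  have WF : W \in F by move: WG; rewrite Gc => /andP [].
  exists (W :\: CL); last by rewrite eqD.
  rewrite inE; apply/andP; split; [by apply/imsetP; exists W | by rewrite inE aW aCL].
have naG W : W \in G -> a \notin W.
  by move=> WG; apply: contra nex => aW; apply/existsP; exists W; rewrite WG aW.
have WmG : Wm \in G by rewrite Gc WmF -mE eqxx.
have prE W : (W :\: CL) :\: [set (a.1,false); (a.1,true)] =
    W :\: [set x | x.1 \in a.1 :: map fst L].
  apply/setP => -[i b]; rewrite !inE /= !xpair_eqE /=.
  by case: (i == a.1); case: b; rewrite /= ?andbF ?andbT.
rewrite /projection -imset_comp.
have Ac W : (W \in argm F [set x in a :: L]) = (W \in F) && (val [set x in a :: L] W == -1 + m).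
  apply: argm_char.
    by exists Wm => //; rewrite vE (val1 _ (tvF _ WmF)) (negbTE (naG _ WmG)) mE.
  move=> W2 W2F; rewrite vE (val1 _ (tvF _ W2F)); case: (boolP (a \in W2)) => aW2.
    have ne : val TL W2 != m.
      apply/negP => /eqP e; have : W2 \in G by rewrite Gc W2F e eqxx.
      by move/naG; rewrite aW2.
    have lt : val TL W2 < m by rewrite lt_neqAle ne ub.
    have := parity _ _ WmF W2F; rewrite -mE => /(_ lt); exact: L4.
  exact: L5 (ub W2 W2F).
apply/setP => B; apply/imsetP/imsetP.
  move=> [W WG ->]; exists W; last by rewrite /= prE.
  have WF : W \in F by move: WG; rewrite Gc => /andP [].
  have vW : val TL W = m by move: WG; rewrite Gc => /andP [_ /eqP].
  by rewrite Ac WF vE (val1 _ (tvF _ WF)) (negbTE (naG _ WG)) vW eqxx.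
move=> [W]; rewrite Ac => /andP [WF /eqP vW] ->.
case: (boolP (val TL W == m)) => [/eqP e | ne].
  by exists W; [rewrite Gc WF e eqxx | rewrite /= prE].
have aW : a \in W.
  apply/negPn/negP => naW; move: vW; rewrite vE (val1 _ (tvF _ WF)) (negbTE naW) => h.
  by rewrite (L6 h) eqxx in ne.
move: vW; rewrite vE (val1 _ (tvF _ WF)) aW => vW.
have lt : val TL W < val TL Wm by rewrite -mE; exact: L7.
have [Z ZF [ltZ cZ]] := improve dm WF WmF lt.
have ZG : Z \in G.
  by rewrite Gc ZF (L8 vW (parity _ _ ZF WF ltZ) (ub Z ZF)) eqxx.
exists Z => //; rewrite /= prE.
apply: setD_agree (tvF _ WF) (tvF _ ZF) _.
move=> k kD; rewrite inE; apply/negPn/negP; rewrite negb_or => /andP [nka nkL].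
have aD : a.1 \in diff W Z := memdiff (tvF _ WF) (tvF _ ZF) aW (naG _ ZG).
have ne' : a.1 != k by rewrite eq_sym.
have DE : diff W Z = [set a.1; k].
  apply/eqP; rewrite eq_sym eqEcard; apply/andP; split.
    by apply/subsetP => x; rewrite in_set2 => /orP [] /eqP ->.
  by rewrite cards2 ne'.
have := val_diff TL (tvF _ WF) (tvF _ ZF).
rewrite DE big_setU1 ?inE // big_set1 (tvTL0 _ naL) (tvTL0 _ nkL) /=. rewrite !mul0r add0r mulr0.
by move=> /eqP; rewrite subr_eq0 => /eqP e; move: ltZ; rewrite e ltxx.
Qed.


Lemma sum_lemma (D : {set 'I_n}) (u v : 'I_n -> int) : (#|D| <= 2)%N ->
  (forall i, -1 <= u i <= 1) -> (forall i, -1 <= v i <= 1) -> (forall i, u i = 0 \/ v i = 0) ->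
  0 < \sum_(i in D) u i -> 0 <= \sum_(i in D) (u i + v i).
Proof.
move=> cD hu hv huv; case: (ltngtP #|D| 1) => c.
- move: c; rewrite ltnS leqn0 => /eqP /cards0_eq ->; by rewrite big_set0 ltxx.
- have /cards2P [i [j [nij ->]]] : #|D| == 2 by rewrite eqn_leq cD c.
  rewrite !big_setU1 ?inE // !big_set1; exact: L11.
- have /cards1P [i ->] : #|D| == 1 by rewrite c.
  rewrite !big_set1; exact: L10.
Qed.

Lemma tv_range T i : -1 <= tv T i <= 1.
Proof. by rewrite /tv; case: ((i,false) \in T); case: ((i,true) \in T). Qed.

Lemma tv_range_mul T W i : transv W -> -1 <= tv T i * tv W i <= 1.
Proof.
move=> tW; rewrite (tv_transv i tW); case: ((i,false) \in W); rewrite ?mulr1 ?mulrN1 ?tv_range //.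
by have := tv_range T i; rewrite /tv; case: ((i,false) \in T); case: ((i,true) \in T).
Qed.

Lemma mem_pos (A : {set 'I_n}) i b : ((i,b) \in pos A) = ~~ b && (i \in A).
Proof.
apply/imsetP/andP => [[j jA [-> ->]] //|[hb iA]]; exists i => //.
by move: hb; case: b.
Qed.

Lemma mem_neg (A : {set 'I_n}) i b : ((i,b) \in neg A) = b && (i \in A).
Proof.
apply/imsetP/andP => [[j jA [-> ->]] //|[hb iA]]; exists i => //.
by move: hb; case: b.
Qed.

Lemma mem_mapb (s : seq 'I_n) i (b c : bool) : ((i,b) \in [seq (j,c) | j <- s]) = (b == c) && (i \in s).
Proof.
apply/mapP/andP => [[j js [-> ->]]|[/eqP -> iS]]; first by rewrite eqxx.
by exists i.
Qed.

End Aux2.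

Unset Implicit Arguments.
Theorem proposition2p3 (n : nat) (F : {set {set selt n}}) (A B : {set 'I_n})
    (S : {set selt n}) :
  is_delta_matroid [set: 'I_n] F ->
  [disjoint A & B] ->
  admissible S ->
  [disjoint S & pos A :|: pos B :|: neg A :|: neg B] ->
  rankfun (delete B (contract A F)) S =
    rankfun F (S :|: pos A :|: neg B) - rankfun F (pos A :|: neg B).
Proof.
move=> dm dAB admS dS.
have [F0 _ _] := dm; have [W0 W0F] := set0Pn _ F0.
have tvF W : W \in F -> transv W by move=> WF; exact: dm_transv dm WF.
set L := [seq (i,true) | i <- enum B] ++ [seq (i,false) | i <- enum A].
have dcE : delete B (contract A F) = foldr op1 F L.
  rewrite /delete /contract foldr_cat.
  have -> : foldr (@contract1 n) F (enum A) = foldr op1 F [seq (i,false) | i <- enum A].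
    by elim: (enum A) => //= i s ->.
  by elim: (enum B) => //= i s ->.
have mL : map fst L = enum B ++ enum A.
  by rewrite /L map_cat; congr (_ ++ _); [elim: (enum B) => //= i s -> | elim: (enum A) => //= i s ->].
have uL : uniq (map fst L).
  rewrite mL cat_uniq !enum_uniq /= andbT; apply/hasPn => x; rewrite !mem_enum => xA.
  by rewrite (disjointFr dAB xA).
set TL := pos A :|: neg B.
have TLE : [set x in L] = TL.
  apply/setP => -[i b]; rewrite !inE mem_cat !mem_mapb mem_pos mem_neg !mem_enum.
  by case: b; rewrite /= ?orbF.
rewrite dcE (minor_char dm uL) TLE -setUA.
set CL := [set x | x.1 \in map fst L].
have dST : [disjoint S & TL].
  apply: disjointWr dS; apply/subsetP => x; rewrite !inE => /orP [] ->; by rewrite ?orbT.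
have Sout i b : i \in A :|: B -> ((i,b) \in S) = false.
  move=> iAB; apply: (disjointFl dS); rewrite !inE !mem_pos !mem_neg.
  by move: iAB; rewrite inE; case: b => /orP [] ->; rewrite ?orbT.
have tvSTL i : tv S i = 0 \/ tv TL i = 0.
  case: (boolP (i \in A :|: B)) => iAB.
    by left; rewrite /tv !Sout.
  right; rewrite /tv !inE !mem_pos !mem_neg /=.
  by move: iAB; rewrite inE negb_or => /andP [/negbTE -> /negbTE ->].
have valSD W : W \in F -> val S (W :\: CL) = val S W.
  move=> WF; rewrite !val_sum; apply: eq_bigr => i _.
  case: (boolP (i \in A :|: B)) => iAB; first by rewrite /tv !Sout // subrr !mul0r.
  congr (_ * _); rewrite /tv !inE /= mL mem_cat !mem_enum.
  by move: iAB; rewrite inE negb_or => /andP [/negbTE -> /negbTE ->].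
have vU W : val (S :|: TL) W = val S W + val TL W by rewrite val_setU.
have [Wm WmF mE] := rank_ex TL W0F.
have ub W : W \in F -> val TL W <= rankfun F TL by move=> WF; exact: rank_le.
have [W1 W1F r1E] := rank_ex (S :|: TL) W0F.
have ub1 W : W \in F -> val (S :|: TL) W <= rankfun F (S :|: TL) by move=> WF; exact: rank_le.
move: (rankfun F TL) (rankfun F (S :|: TL)) mE ub r1E ub1 => m r1 mE ub r1E ub1.
have Gc := argm_char (ex_intro2 _ _ Wm WmF (esym mE)) ub.
apply: rank_char; last first.
  move=> B' /imsetP [W WG ->]; move: WG; rewrite Gc => /andP [WF /eqP vW].
  rewrite valSD //; apply: L9 vW; rewrite -vU; exact: ub1.
pose P := [pred W | (W \in F) && (val (S :|: TL) W == r1)].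
have PW1 : P W1 by rewrite /= W1F r1E eqxx.
have [X /andP [XF /eqP vX] maxX] := ex_argmax (val TL) PW1.
have vTX : val TL X = m.
  apply/eqP; rewrite eq_le ub //=; rewrite leNgt; apply/negP => lt.
  rewrite mE in lt.
  have [Z ZF [ltZ cZ]] := improve dm XF WmF lt.
  have tX := tvF _ XF; have tZ := tvF _ ZF.
  have PZ : P Z.
    apply/andP; split => //; rewrite eq_le ub1 //=; rewrite -vX -subr_ge0 (val_diff _ tX tZ).
    rewrite pmulr_rge0 //.
    have E : \sum_(i in diff X Z) tv (S :|: TL) i * tv Z i =
             \sum_(i in diff X Z) (tv TL i * tv Z i + tv S i * tv Z i).
      by apply: eq_bigr => i _; rewrite tv_setU // mulrDl addrC.
    rewrite E; apply: sum_lemma => // [i|i|i|].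
    - exact: tv_range_mul.
    - exact: tv_range_mul.
    - by case: (tvSTL i) => ->; rewrite mul0r; [right|left].
    have := ltZ; rewrite -subr_gt0 (val_diff _ tX tZ) pmulr_rgt0 //.
  by have := maxX Z PZ; rewrite leNgt ltZ.
have XG : X \in argm F TL by rewrite Gc XF vTX eqxx.
exists (X :\: CL); first by apply/imsetP; exists X.
by rewrite valSD //; apply: L12 vTX; rewrite -vU.
Qed.
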